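(* For every $n\ge 1$, $\mathbb{E}_n[U_n]=H_n=\sum_{j=1}^n \frac1j$; that is, the expected number of unrestricted rows of a uniformly random type-B permutation tableau of size $n$ is the $n$-th harmonic number.
   Context: A Ferrers diagram is a left-justified array of cells whose row lengths weakly decrease from top to bottom (rows of length $0$ are allowed). Its half-perimeter is the number of rows plus the number of columns. If the diagram has $c$ columns, the shifted Ferrers diagram is obtained by inserting $c$ new left-justified rows above it, of lengths $c,c-1,\dots,1$ from top to bottom; the rightmost cell of each inserted row is a diagonal cell. A type-B permutation tableau of size $n$ is a filling of a shifted Ferrers diagram of half-perimeter $n$ with $0$'s and $1$'s such that: (1) every column contains at least one $1$; (2) no $0$ has both a $1$ above it in its column and a $1$ to its left in its row; (3) if a diagonal cell contains $0$ then every cell of its row contains $0$. Let $\mathcal{B}_n$ be the set of such tableaux, $\mathbb{P}_n$ the uniform probability measure on $\mathcal{B}_n$, $\mathbb{E}_n$ its expectation. A restricted $0$ is a cell containing $0$ that either has a $1$ above it in its column or is a diagonal cell. A row of the shifted diagram (possibly of length $0$) is unrestricted if it contains no restricted $0$. For $T\in\mathcal{B}_n$, $U_n(T)$ is the number of unrestricted rows of $T$. *)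

(* Defs.v *)
From mathcomp Require Import all_boot all_order all_algebra.
Set Implicit Arguments. Unset Strict Implicit. Unset Printing Implicit Defensive.
Import GRing.Theory Num.Theory.

(* Encoding.  A type-B tableau of size n has a shifted diagram with exactly  *)
(* n rows (c inserted staircase rows + k = n - c rows of the Ferrers diagram) *)
(* and c <= n columns, so it fits in the n x n grid 'I_n * 'I_n.             *)
(* A candidate object is a triple (c, lam, fill):                            *)
(*   c    : number of columns (0 <= c <= n);                                 *)
(*   lam  : lam i = length of row i of the Ferrers diagram (i < n - c);      *)
(*          normalised by lam i = 0 for i >= n - c;                          *)
(*   fill : fill (r, j) = entry of cell (r, j) of the shifted diagram        *)
(*          (true = 1, false = 0); normalised to false outside the diagram.  *)
(* Rows r < c of the shifted diagram are the inserted staircase rows:        *)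
(* row r has length r+1 and its rightmost cell (r, r) is its diagonal cell,  *)
(* which is the top cell of column r.  Row r >= c is row r - c of the         *)
(* Ferrers diagram.  Rows are numbered from the top, columns from the left.  *)

Definition candB (n : nat) : finType :=
  ('I_n.+1 * {ffun 'I_n -> 'I_n.+1} * {ffun 'I_n * 'I_n -> bool})%type.

Section TypeB.
Variable n : nat.
Implicit Types (t : candB n) (r j : 'I_n).

Definition ncols t : nat := t.1.1.
Definition lam t (i : 'I_n) : nat := t.1.2 i.
Definition fill t r j : bool := t.2 (r, j).

Definition rowlen t r : nat :=
  if (r < ncols t)%N then r.+1
  else (if insub (r - ncols t)%N is Some i then lam t i else 0%N).

Definition in_cell t r j : bool := (j < rowlen t r)%N.

Definition diag_cell t r j : bool := (r < ncols t)%N && (val j == val r).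

Definition wf_shape t : bool :=
  [forall i : 'I_n, forall i' : 'I_n, (i <= i')%N ==> (lam t i' <= lam t i)%N]
  && [forall i : 'I_n, (lam t i <= ncols t)%N]
  && [forall i : 'I_n, (n - ncols t <= i)%N ==> (lam t i == 0%N)]
  && [forall r : 'I_n, forall j : 'I_n, ~~ in_cell t r j ==> ~~ fill t r j].

Definition one_above t r j : bool :=
  [exists r' : 'I_n, [&& (r' < r)%N, in_cell t r' j & fill t r' j]].

Definition one_left t r j : bool :=
  [exists j' : 'I_n, [&& (j' < j)%N, in_cell t r j' & fill t r j']].

Definition cond_columns t : bool :=
  [forall j : 'I_n, (j < ncols t)%N ==> [exists r : 'I_n, in_cell t r j && fill t r j]].

Definition cond_Le t : bool :=
  [forall r : 'I_n, forall j : 'I_n, (in_cell t r j && ~~ fill t r j) ==>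
                        ~~ (one_above t r j && one_left t r j)].

Definition cond_diag t : bool :=
  [forall r : 'I_n, forall j : 'I_n, (diag_cell t r j && ~~ fill t r j) ==>
                        [forall j' : 'I_n, in_cell t r j' ==> ~~ fill t r j']].

Definition is_typeB t : bool :=
  [&& wf_shape t, cond_columns t, cond_Le t & cond_diag t].

Definition typeB_tableaux : {set candB n} := [set t | is_typeB t].

Definition restricted_zero t r j : bool :=
  [&& in_cell t r j, ~~ fill t r j & one_above t r j || diag_cell t r j].

Definition unrestricted_row t r : bool := [forall j : 'I_n, ~~ restricted_zero t r j].

(* U_n(T): number of unrestricted rows (rows of length 0 included) *)
Definition U_rows t : nat := #|[set r : 'I_n | unrestricted_row t r]|.

End TypeB.

Definition uniform_expect (T : finType) (A : {set T}) (X : T -> nat) : rat :=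
  ((\sum_(t in A) (X t)%:R) / (#|A|)%:R)%R.

Definition harmonic (n : nat) : rat := (\sum_(j < n) ((j.+1)%:R)^-1)%R.

(* Main.v *)
Require Import Defs.
From mathcomp Require Import all_boot all_order all_algebra.
From mathcomp Require Import zify ring.
From Stdlib Require Import FunctionalExtensionality.
Set Implicit Arguments. Unset Strict Implicit. Unset Printing Implicit Defensive.
Import GRing.Theory Num.Theory.

Definition RL (c : nat) (L : nat -> nat) (r : nat) : nat :=
  if r < c then r.+1 else L (r - c).

Definition Norm m c (L : nat -> nat) (F : nat -> nat -> bool) : Prop :=
  [/\ c <= m, (forall i, L i <= c), (forall i, m - c <= i -> L i = 0)
   & (forall r j, F r j -> j < RL c L r)].
Definition Shape (L : nat -> nat) : Prop := forall i i', i <= i' -> L i' <= L i.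
Definition ColN c (F : nat->nat->bool) : Prop := forall j, j < c -> exists r, F r j.
Definition LeN c L (F : nat->nat->bool) : Prop := forall r j, j < RL c L r -> ~~ F r j ->
   (exists2 r', r' < r & F r' j) -> (exists2 j', j' < j & F r j') -> False.
Definition DiagN c (F : nat->nat->bool) : Prop :=
  forall r, r < c -> ~~ F r r -> forall j, ~~ F r j.
Definition ValidN m c L F :=
  [/\ Norm m c L F, Shape L, ColN c F, LeN c L F & DiagN c F].
Definition UnresN c L (F : nat->nat->bool) r : Prop := forall j, j < RL c L r -> ~~ F r j ->
   (exists2 r', r' < r & F r' j) \/ (r < c /\ j = r) -> False.

Lemma RL_ge m c L F r : Norm m c L F -> m <= r -> RL c L r = 0.
Proof.
case=> cm _ L0 _ mr; rewrite /RL; have -> : (r < c) = false by lia.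
apply: L0; lia.
Qed.

Lemma RL_le m c L F r : Norm m c L F -> RL c L r <= m.
Proof.
move=> N; case: N => cm Lc L0 FC; rewrite /RL; case: ifP => h; first lia.
by apply: leq_trans (Lc _) cm.
Qed.

Lemma F_bound m c L F r j : Norm m c L F -> F r j -> (r < m) && (j < m).
Proof.
move=> N Frj; have := N; case=> _ _ _ FC; have := FC _ _ Frj => h.
have hm := RL_le r N.
case: (leqP m r) => rm; first by rewrite (RL_ge N rm) in h.
apply/andP; split => //; lia.
Qed.
Lemma extaN m c L F : ValidN m c L F -> ValidN m.+1 c L F /\ RL c L m = 0.
Proof.
case=> N S Co Le Di; split; last exact: RL_ge N (leqnn m).
case: N => cm Lc L0 FC; split => //; split => //; first lia.
move=> i hi; apply: L0; lia.
Qed.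

Lemma remaN m c L F : ValidN m.+1 c L F -> RL c L m = 0 -> ValidN m c L F.
Proof.
case=> N S Co Le Di h; split => //; case: N => cm Lc L0 FC.
have cm' : c <= m.
  move: h; rewrite /RL; case: ltnP => //; lia.
split => // i hi; move: h; rewrite /RL ltnNge cm' /= => h.
have := S (m - c) i hi; rewrite h; lia.
Qed.

Definition Lb m c (L : nat -> nat) i := if i < m - c then (L i).+1 else 0.
Definition Fb (g : nat -> bool) (F : nat -> nat -> bool) r j :=
  if j == 0 then g r else if r == 0 then false else F r.-1 j.-1.

Lemma RLb m c L r : c <= m ->
  RL c.+1 (Lb m c L) r = if r == 0 then 1 else if r <= m then (RL c L r.-1).+1 else 0.
Proof.
move=> cm; rewrite /RL /Lb; case: r => [|r] //=.
rewrite ltnS subSS; case: (ltnP r c) => rc.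
  by have -> : r < m by lia.
case: (ltnP r m) => rm.
  by have -> : r - c < m - c by lia.
by have -> : r - c < m - c = false by lia.
Qed.
Lemma extbN m c L F (g : nat -> bool) :
  (forall r, g r -> r <= m) -> ValidN m c L F -> (exists r, g r) ->
  (forall r, g r -> r = 0 \/ UnresN c L F r.-1) ->
  ValidN m.+1 c.+1 (Lb m c L) (Fb g F).
Proof.
move=> gb [N S Co Le Di] gne gU.
have N' := N; case: N' => cm Lc L0 FC.
split.
- split; first lia.
  + by move=> i; rewrite /Lb; case: ifP => _ //; rewrite ltnS.
  + by move=> i hi; rewrite /Lb; have -> : i < m - c = false by lia.
  + move=> r j; rewrite /Fb RLb //; case: eqP => [->|/eqP j0].
      move=> /gb rm; case: eqP => // _; by rewrite rm.
    case: eqP => // /eqP r0 Frj.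
    have /andP[rm _] := F_bound N Frj.
    have := FC _ _ Frj.
    have -> : r <= m by lia.
    lia.
- move=> i i' ii'; rewrite /Lb; case: ifP => h'; last by [].
  have -> : i < m - c by lia.
  have := S i i' ii'; lia.
- move=> j; case: j => [|j] hj.
    by case: gne => r gr; exists r; rewrite /Fb.
  move: hj; rewrite ltnS => /Co [r Frj]; exists r.+1; by rewrite /Fb.
- move=> r j; rewrite RLb // /Fb.
  case: j => [|j]; first by move=> _ _ _ [j'].
  case: r => [|r] //= hj nF [r' hr' Fr'] [j' hj' Fj'].
  move: hj; case: ifP => // rm hj.
  move: Fr'; case: r' hr' => [|r'] //= hr' Fr'.
  move: Fj'; case: j' hj' => [|j'] /= hj' Fj'.
    case: (gU _ Fj') => // /= U; apply: (U j) => //; left; by exists r'.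
  apply: (Le r j) => //; [by exists r' | by exists j'].
- move=> r hr; rewrite /Fb; case: r hr => [|r] /= hr.
    by move=> ng0 [|j] //=.
  move=> nF j; case: j => [|j] /=.
    apply/negP => gr; case: (gU _ gr) => // /= U.
    apply: (U r) => //; last by right.
    by move: hr; rewrite /RL ltnS => ->.
  exact: Di.
Qed.
Lemma extbN_inv m c L F (g : nat -> bool) :
  Norm m c L F -> (forall r, g r -> r <= m) ->
  ValidN m.+1 c.+1 (Lb m c L) (Fb g F) ->
  [/\ ValidN m c L F, (exists r, g r) &
      (forall r, g r -> r = 0 \/ UnresN c L F r.-1)].
Proof.
move=> N gb [N' S' Co' Le' Di'].
have N0 := N; case: N0 => cm Lc L0 FC.
split.
- split => //.
  + move=> i i' ii'; case: (ltnP i' (m - c)) => h.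
      have := S' i i' ii'; rewrite /Lb h.
      have -> : i < m - c by lia.
      by rewrite ltnS.
    by rewrite L0.
  + move=> j hj; have [r Fr] : exists r, Fb g F r j.+1 by apply: Co'.
    move: Fr; rewrite /Fb /=; case: r => [|r] //= Fr; by exists r.
  + move=> r j hj nF [r' hr' Fr'] [j' hj' Fj'].
    have rm : r < m.
      case: (ltnP r m) => // h; by rewrite (RL_ge N h) in hj.
    apply: (Le' r.+1 j.+1).
    * by rewrite RLb //= rm.
    * by rewrite /Fb.
    * by exists r'.+1.
    * by exists j'.+1.
  + move=> r hr nF j; have := Di' r.+1 hr nF j.+1; by rewrite /Fb.
- have [r Fr] := Co' 0 isT; by exists r.
- move=> r gr; case: r gr => [|r] gr; first by left.
  right => j hj nF [[r' hr' Fr']|[hrc e]].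
    apply: (Le' r.+1 j.+1).
    * by rewrite RLb //= gb.
    * by rewrite /Fb.
    * by exists r'.+1.
    * by exists 0.
  rewrite /= in e hrc; subst j.
  have := Di' r.+1 hrc nF 0; by rewrite /Fb gr.
Qed.

Lemma unresbN m c L F (g : nat -> bool) r :
  Norm m c L F -> r <= m ->
  UnresN c.+1 (Lb m c L) (Fb g F) r <->
  (if r == 0 then g 0 : Prop else
     UnresN c L F r.-1 /\ (g r \/ forall r', r' < r -> ~~ g r')).
Proof.
move=> N rm; have cm : c <= m by case: N.
case: r rm => [|r] rm /=; split.
- move=> U; apply/negPn/negP => ng; apply: (U 0).
  + by rewrite RLb.
  + by rewrite /Fb /=.
  + by right.
- move=> g0 j hj; rewrite RLb // in hj; case: j hj => // _.
  rewrite /Fb /= g0 => h; discriminate h.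
- move=> U; split.
    move=> j hj nF H; apply: (U j.+1).
    * by rewrite RLb //= rm.
    * by rewrite /Fb.
    * case: H => [[r' hr' Fr']|[hrc ->]]; [left; by exists r'.+1 | by right].
  case gr: (g r.+1); first by left.
  right => r' hr'; apply/negP => gr'; apply: (U 0).
  * by rewrite RLb //= rm.
  * by rewrite /Fb gr.
  * left; exists r' => //; by rewrite /Fb.
- case=> U H j; rewrite RLb //= rm; case: j => [|j] hj.
    rewrite /Fb /= => ng [[r' hr' gr']|[_ //]].
    case: H => [gr|H]; first by rewrite gr in ng.
    by move: gr'; rewrite /Fb /= => gr'; rewrite (negPf (H _ hr')) in gr'.
  rewrite /Fb /= => nF [[r' hr' Fr']|[hrc [e]]].
    move: Fr'; case: r' hr' => [|r'] //= hr' Fr'.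
    apply: (U j) => //; left; by exists r'.
  apply: (U j) => //; right; by split.
Qed.
Lemma rembN m c L F : ValidN m.+1 c L F -> 0 < RL c L m ->
  [/\ c = c.-1.+1, Norm m c.-1 (fun i => (L i).-1) (fun r j => F r.+1 j.+1),
      L = Lb m c.-1 (fun i => (L i).-1) & F = Fb (fun r => F r 0) (fun r j => F r.+1 j.+1)].
Proof.
move=> [N S Co Le Di] hm; have N0 := N; case: N0 => cm Lc L0 FC.
have c0 : 0 < c.
  case: c cm Lc L0 FC hm {N Co Le Di} => // _ Lc _ _; rewrite /RL /=.
  by have := Lc (m - 0); rewrite subn0; case: (L m).
have ce : c = c.-1.+1 by rewrite prednK.
split => //.
- split.
  + lia.
  + move=> i; have := Lc i; lia.
  + move=> i hi; rewrite L0 //; lia.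
  + move=> r j Fr; have := FC _ _ Fr; rewrite /RL.
    case: (ltnP r.+1 c) => h1.
      have -> : r < c.-1 by lia.
      lia.
    have -> : r < c.-1 = false by lia.
    have -> : r - c.-1 = r.+1 - c by lia.
    lia.
- apply: functional_extensionality => i; rewrite /Lb.
  case: ifP => h.
    have hi : i <= m - c by lia.
    have cm' : c <= m.
      move: hm; rewrite /RL; case: ltnP => // h2; lia.
    have : 0 < L (m - c).
      have e : (m < c) = false by lia.
      by move: hm; rewrite /RL e.
    have := S _ _ hi; lia.
  rewrite L0 //; lia.
- apply: functional_extensionality => r; apply: functional_extensionality => j.
  rewrite /Fb; case: eqP => [->|/eqP j0] //.
  case: eqP => [->|/eqP r0].
    apply/negP => F0; have := FC _ _ F0; rewrite /RL c0; lia.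
  by rewrite !prednK //; lia.
Qed.
Section Bridge.
Variable n : nat.
Implicit Types t : candB n.

Definition Ln t (i : nat) : nat := oapp (fun i' : 'I_n => nat_of_ord (t.1.2 i')) 0 (insub i).
Definition Fn t (r j : nat) : bool :=
  oapp (fun r' : 'I_n => oapp (fun j' : 'I_n => t.2 (r', j')) false (insub j)) false (insub r).

Lemma Ln_ord t (i : 'I_n) : Ln t i = lam t i.
Proof. by rewrite /Ln valK. Qed.
Lemma Ln_ge t i : n <= i -> Ln t i = 0.
Proof. move=> h; rewrite /Ln; case: insubP => //= i' hi _; lia. Qed.
Lemma Fn_ord t (r j : 'I_n) : Fn t r j = fill t r j.
Proof. by rewrite /Fn !valK. Qed.
Lemma Fn_ge t r j : (n <= r) || (n <= j) -> Fn t r j = false.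
Proof.
case/orP => h; rewrite /Fn.
  rewrite (@insubF _ _ _ r) //; apply/negbTE; rewrite -leqNgt //.
case: (insub r) => //= r'.
rewrite (@insubF _ _ _ j) //; apply/negbTE; rewrite -leqNgt //.
Qed.
Lemma rowlenE t (r : 'I_n) : rowlen t r = RL (ncols t) (Ln t) r.
Proof. by rewrite /rowlen /RL /Ln; case: ifP => //; case: insub. Qed.
Lemma in_cellE t r j : in_cell t r j = (j < RL (ncols t) (Ln t) r).
Proof. by rewrite /in_cell rowlenE. Qed.
Lemma ncols_le t : ncols t <= n.
Proof. by rewrite -ltnS ltn_ord. Qed.

Lemma Ln_lt t i (hi : i < n) : Ln t i = lam t (Ordinal hi).
Proof. exact: (Ln_ord t (Ordinal hi)). Qed.
Lemma Fn_lt t r j (hr : r < n) (hj : j < n) : Fn t r j = fill t (Ordinal hr) (Ordinal hj).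
Proof. exact: (Fn_ord t (Ordinal hr) (Ordinal hj)). Qed.

Lemma wfP t : wf_shape t <-> Norm n (ncols t) (Ln t) (Fn t) /\ Shape (Ln t).
Proof.
rewrite /wf_shape -!andbA; split.
- case/and4P => /forallP H1 /forallP H2 /forallP H3 /forallP H4.
  split; first split.
  + exact: ncols_le.
  + move=> i; case: (ltnP i n) => hi; last by rewrite Ln_ge.
    by rewrite Ln_lt; apply: H2.
  + move=> i hi; case: (ltnP i n) => hi'; last by rewrite Ln_ge.
    rewrite Ln_lt; apply/eqP; have := H3 (Ordinal hi'); by rewrite /= hi.
  + move=> r j; case: (ltnP r n) => hr; last by rewrite Fn_ge ?hr.
    case: (ltnP j n) => hj; last by rewrite Fn_ge ?hj ?orbT.
    rewrite Fn_lt => Fr; have /forallP := H4 (Ordinal hr) => /(_ (Ordinal hj)).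
    by rewrite Fr in_cellE /= implybF negbK.
  + move=> i i' ii'; case: (ltnP i' n) => hi'; last by rewrite Ln_ge.
    have hi : i < n by apply: leq_ltn_trans hi'.
    rewrite !Ln_lt; have /forallP := H1 (Ordinal hi) => /(_ (Ordinal hi')).
    by rewrite /= ii'.
- case=> [[_ Lc L0 FC] S]; apply/and4P; split.
  + apply/forallP => i; apply/forallP => i'; apply/implyP => ii'.
    by rewrite -!Ln_ord; apply: S.
  + by apply/forallP => i; rewrite -Ln_ord.
  + apply/forallP => i; apply/implyP => hi; by rewrite -Ln_ord L0.
  + apply/forallP => r; apply/forallP => j; apply/implyP.
    rewrite in_cellE -Fn_ord; apply: contra => /FC; by [].
Qed.
End Bridge.
Section Bridge2.
Variable n : nat.
Implicit Types t : candB n.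

Lemma aboveP t (r j : 'I_n) : Norm n (ncols t) (Ln t) (Fn t) ->
  one_above t r j <-> exists2 r', r' < r & Fn t r' j.
Proof.
move=> N; have N0 := N; case: N0 => _ _ _ FC; split.
  by case/existsP => r' /and3P[h1 h2 h3]; exists r' => //; rewrite Fn_ord.
case=> r' hr' Fr; have hr'n : r' < n by apply: ltn_trans hr' (ltn_ord r).
apply/existsP; exists (Ordinal hr'n); rewrite /= hr' in_cellE /=.
rewrite (FC _ _ Fr) -Fn_ord; exact: Fr.
Qed.

Lemma leftP t (r j : 'I_n) : Norm n (ncols t) (Ln t) (Fn t) ->
  one_left t r j <-> exists2 j', j' < j & Fn t r j'.
Proof.
move=> N; have N0 := N; case: N0 => _ _ _ FC; split.
  by case/existsP => j' /and3P[h1 h2 h3]; exists j' => //; rewrite Fn_ord.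
case=> j' hj' Fr; have hj'n : j' < n by apply: ltn_trans hj' (ltn_ord j).
apply/existsP; exists (Ordinal hj'n); rewrite /= hj' in_cellE /=.
rewrite (FC _ _ Fr) -Fn_ord; exact: Fr.
Qed.

Lemma typeBP t : is_typeB t <-> ValidN n (ncols t) (Ln t) (Fn t).
Proof.
rewrite /is_typeB; split.
- case/and4P => /wfP [N S] /forallP Co /forallP Le /forallP Di.
  have N0 := N; case: N0 => cn Lc L0 FC.
  split => //.
  + move=> j hj; have hjn : j < n by apply: leq_trans hj cn.
    have := Co (Ordinal hjn); rewrite /= hj => /existsP [r /andP[_ Fr]].
    by exists r; rewrite (Fn_ord t r (Ordinal hjn)).
  + move=> r j hj nF ab lf.
    have hrn : r < n.
      case: (ltnP r n) => // h; by rewrite (RL_ge N h) in hj.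
    have hjn : j < n by apply: leq_trans hj (RL_le _ N).
    have /forallP := Le (Ordinal hrn) => /(_ (Ordinal hjn)).
    rewrite in_cellE /= hj -Fn_ord nF /=.
    move/negP; apply; apply/andP; split.
      by apply/(aboveP (Ordinal hrn) (Ordinal hjn) N).
    by apply/(leftP (Ordinal hrn) (Ordinal hjn) N).
  + move=> r hr nF j.
    have hrn : r < n by apply: leq_trans hr cn.
    case: (ltnP j n) => hjn; last by rewrite Fn_ge // hjn orbT.
    have /forallP := Di (Ordinal hrn) => /(_ (Ordinal hrn)).
    rewrite /diag_cell /= hr eqxx -Fn_ord nF /= => /forallP /(_ (Ordinal hjn)).
    rewrite in_cellE /= -Fn_ord; apply: contraTN => Fj.
    by rewrite (FC _ _ Fj) /= Fj.
- case=> N S Co Le Di; have N0 := N; case: N0 => cn Lc L0 FC.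
  apply/and4P; split.
  + by apply/wfP.
  + apply/forallP => j; apply/implyP => hj; have [r Fr] := Co _ hj.
    have /andP[hr _] := F_bound N Fr.
    apply/existsP; exists (Ordinal hr); rewrite in_cellE /= (FC _ _ Fr) -Fn_ord; exact: Fr.
  + apply/forallP => r; apply/forallP => j; apply/implyP.
    rewrite in_cellE -Fn_ord => /andP[hj nF]; apply/negP => /andP[].
    rewrite (aboveP r j N) (leftP r j N) => ab lf; exact: (Le r j hj nF ab lf).
  + apply/forallP => r; apply/forallP => j; apply/implyP.
    rewrite /diag_cell => /andP[/andP[hr /eqP e]].
    rewrite -Fn_ord e => nF; apply/forallP => j'; apply/implyP => _.
    by rewrite -Fn_ord; apply: Di.
Qed.

Lemma unresP t (r : 'I_n) : Norm n (ncols t) (Ln t) (Fn t) ->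
  unrestricted_row t r <-> UnresN (ncols t) (Ln t) (Fn t) r.
Proof.
move=> N; split.
- move=> /forallP H j hj nF C.
  have hjn : j < n by apply: leq_trans hj (RL_le _ N).
  have := H (Ordinal hjn); rewrite /restricted_zero in_cellE /= hj.
  rewrite -Fn_ord nF /=; move/negP; apply; apply/orP.
  case: C => [ab|[hr e]].
    by left; apply/(aboveP r (Ordinal hjn) N).
  by right; rewrite /diag_cell /= hr e eqxx.
- move=> U; apply/forallP => j; rewrite /restricted_zero in_cellE -Fn_ord.
  apply/negP => /and3P[hj nF /orP[ab|dg]].
    move/(aboveP r j N): ab => ab; exact: (U j hj nF (or_introl ab)).
  move: dg; rewrite /diag_cell => /andP[hr /eqP e].
  exact: (U j hj nF (or_intror (conj hr e))).
Qed.
End Bridge2.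
Definition mk n (c : nat) (L : nat -> nat) (F : nat -> nat -> bool) : candB n :=
  (inord c, [ffun i : 'I_n => inord (L i)], [ffun p : 'I_n * 'I_n => F p.1 p.2]).

Section Mk.
Variable n : nat.

Lemma mk_ncols c L F : c <= n -> ncols (mk n c L F) = c.
Proof. by move=> h; rewrite /ncols /= inordK. Qed.

Lemma mk_Ln c L F : Norm n c L F -> Ln (mk n c L F) = L.
Proof.
move=> N; have N0 := N; case: N0 => cn Lc L0 FC.
apply: functional_extensionality => i; case: (ltnP i n) => hi.
  rewrite Ln_lt /lam /= ffunE /= inordK //; have := Lc i; lia.
rewrite Ln_ge // L0 //; lia.
Qed.

Lemma mk_Fn c L F : Norm n c L F -> Fn (mk n c L F) = F.
Proof.
move=> N; apply: functional_extensionality => r; apply: functional_extensionality => j.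
case: (ltnP r n) => hr; last first.
  rewrite Fn_ge ?hr //; apply/esym/negbTE/negP => /(F_bound N); lia.
case: (ltnP j n) => hj; last first.
  rewrite Fn_ge ?hj ?orbT //; apply/esym/negbTE/negP => /(F_bound N); lia.
by rewrite Fn_lt /fill /= ffunE.
Qed.

Lemma mk_eta (t : candB n) : mk n (ncols t) (Ln t) (Fn t) = t.
Proof.
case: t => [[c l] f]; rewrite /mk /ncols /=; congr (_, _, _).
- exact: inord_val.
- apply/ffunP => i; rewrite ffunE; apply: val_inj; rewrite /= (Ln_ord (c, l, f) i) inordK //.
  exact: ltn_ord.
- apply/ffunP => [[r j]]; rewrite ffunE /=.
  exact: (Fn_ord (c, l, f) r j).
Qed.

Lemma mk_typeB c L F : Norm n c L F -> is_typeB (mk n c L F) <-> ValidN n c L F.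
Proof.
move=> N; have cn : c <= n by case: N.
by rewrite typeBP mk_ncols // mk_Ln // mk_Fn.
Qed.

Lemma typeB_Norm (t : candB n) : is_typeB t -> Norm n (ncols t) (Ln t) (Fn t).
Proof. by move/typeBP; case. Qed.

End Mk.
Lemma card_sum (T : finType) (P : pred T) : #|[set r | P r]| = \sum_r (P r : nat).
Proof.
rewrite -sum1_card big_mkcond /=; apply: eq_bigr => r _; rewrite inE; by case: (P r).
Qed.

Section Ext.
Variable n : nat.

Definition ext_a (t : candB n) : candB n.+1 := mk n.+1 (ncols t) (Ln t) (Fn t).
Definition Sn (S : {set 'I_n.+1}) (r : nat) : bool :=
  oapp (fun r' : 'I_n.+1 => r' \in S) false (insub r).
Definition ext_b (t : candB n) (S : {set 'I_n.+1}) : candB n.+1 :=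
  mk n.+1 (ncols t).+1 (Lb n (ncols t) (Ln t)) (Fb (Sn S) (Fn t)).
Definition lastE (T : candB n.+1) : bool := RL (ncols T) (Ln T) n == 0.
Definition rem_a (T : candB n.+1) : candB n := mk n (ncols T) (Ln T) (Fn T).
Definition rem_b (T : candB n.+1) : candB n :=
  mk n (ncols T).-1 (fun i => (Ln T i).-1) (fun r j => Fn T r.+1 j.+1).
Definition phi (T : candB n.+1) : candB n := if lastE T then rem_a T else rem_b T.
Definition col0 (T : candB n.+1) : {set 'I_n.+1} := [set r : 'I_n.+1 | Fn T r 0].
Definition Ub (t : candB n) (k : nat) : bool :=
  oapp (fun k' : 'I_n => unrestricted_row t k') false (insub k).
Definition Aset (t : candB n) : {set 'I_n.+1} :=
  [set r : 'I_n.+1 | (r == ord0) || Ub t r.-1].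

Lemma Sn_ord S (r : 'I_n.+1) : Sn S r = (r \in S).
Proof. by rewrite /Sn valK. Qed.
Lemma Sn_bound S r : Sn S r -> r <= n.
Proof. rewrite /Sn; case: insubP => //= r' _ <- _; by rewrite -ltnS. Qed.

Lemma ext_a_data t : is_typeB t ->
  [/\ is_typeB (ext_a t), ncols (ext_a t) = ncols t, Ln (ext_a t) = Ln t,
      Fn (ext_a t) = Fn t & lastE (ext_a t)].
Proof.
move=> /typeBP V; have [V' hR] := extaN V.
have N' : Norm n.+1 (ncols t) (Ln t) (Fn t) by case: V'.
rewrite /ext_a /lastE mk_ncols ?mk_Ln ?mk_Fn //; last by case: N'.
split => //; last by rewrite hR.
by apply/mk_typeB.
Qed.

Lemma phi_ext_a t : is_typeB t -> phi (ext_a t) = t.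
Proof.
move=> tB; have [_ e1 e2 e3 e4] := ext_a_data tB.
by rewrite /phi e4 /rem_a e1 e2 e3 mk_eta.
Qed.

Lemma U_ext_a t : is_typeB t -> U_rows (ext_a t) = (U_rows t).+1.
Proof.
move=> tB; have [tB' e1 e2 e3 e4] := ext_a_data tB.
have N := typeB_Norm tB; have N' := typeB_Norm tB'.
rewrite /U_rows !card_sum big_ord_recr /=.
have -> : unrestricted_row (ext_a t) ord_max.
  apply/unresP => //; rewrite e1 e2 e3 => j hj.
  by move: hj; rewrite /= (RL_ge N (leqnn n)).
rewrite addn1; congr (_ .+1); apply: eq_bigr => r _; congr nat_of_bool.
apply/idP/idP => /unresP H; apply/unresP => //.
  by move: (H N'); rewrite e1 e2 e3.
by move: (H N); rewrite e1 e2 e3.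
Qed.
End Ext.
Definition cntb m (A S : {set 'I_m.+1}) : nat :=
  #|[set r in A | if r == ord0 then r \in S
                 else (r \in S) || [forall r' : 'I_m.+1, (r' < r) ==> (r' \notin S)]]|.

Section Extb.
Variable n : nat.
Implicit Types (t : candB n) (S : {set 'I_n.+1}).

Lemma Ub_iff t k : Norm n (ncols t) (Ln t) (Fn t) -> k < n ->
  Ub t k <-> UnresN (ncols t) (Ln t) (Fn t) k.
Proof.
move=> N hk; rewrite /Ub; case: insubP => [k' _ <- /=|]; last by rewrite hk.
exact: unresP.
Qed.

Lemma gcondsE t S : Norm n (ncols t) (Ln t) (Fn t) ->
  (forall r, Sn S r -> r = 0 \/ UnresN (ncols t) (Ln t) (Fn t) r.-1) <-> S \subset Aset t.
Proof.
move=> N; split.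
- move=> H; apply/subsetP => r rS; rewrite inE.
  have := H r; rewrite Sn_ord rS => /(_ isT) [r0|U].
    by apply/orP; left; apply/eqP; apply: val_inj.
  case: (r =P ord0) => //= /eqP r0.
  apply/(Ub_iff N) => //.
  have : nat_of_ord r != 0 by apply: contra r0 => /eqP e; apply/eqP/val_inj.
  have := ltn_ord r; lia.
- move=> /subsetP H r gr; have rn := Sn_bound gr.
  have := H (Ordinal (rn : r < n.+1)); rewrite -Sn_ord /= => /(_ gr).
  rewrite inE => /orP[/eqP e|U]; first by left; move: e => /(congr1 val).
  case: r rn gr U => [|r] rn gr U; first by left.
  by right; apply/(Ub_iff N).
Qed.

Lemma gneE S : (exists r, Sn S r) <-> S != set0.
Proof.
split.
- case=> r gr; have rn := Sn_bound gr.
  apply/set0Pn; exists (Ordinal (rn : r < n.+1)); by rewrite -Sn_ord.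
- case/set0Pn => r rS; exists r; by rewrite Sn_ord.
Qed.

Lemma ext_b_data t S : is_typeB t -> S \subset Aset t -> S != set0 ->
  [/\ is_typeB (ext_b t S), ncols (ext_b t S) = (ncols t).+1,
      Ln (ext_b t S) = Lb n (ncols t) (Ln t),
      Fn (ext_b t S) = Fb (Sn S) (Fn t) & ~~ lastE (ext_b t S)].
Proof.
move=> /typeBP V sA ne; have N : Norm n (ncols t) (Ln t) (Fn t) by case: V.
have V' := extbN (@Sn_bound n S) V (proj2 (gneE S) ne) (proj2 (gcondsE S N) sA).
have N' : Norm n.+1 (ncols t).+1 (Lb n (ncols t) (Ln t)) (Fb (Sn S) (Fn t)) by case: V'.
have cn : ncols t <= n by case: N.
rewrite /ext_b /lastE mk_ncols // (mk_Ln N') (mk_Fn N').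
split => //; first by apply/mk_typeB.
by rewrite RLb // leqnn; case: (n == 0).
Qed.

Lemma phi_ext_b t S : is_typeB t -> S \subset Aset t -> S != set0 ->
  phi (ext_b t S) = t.
Proof.
move=> tB sA ne; have [_ e1 e2 e3 e4] := ext_b_data tB sA ne.
have N := typeB_Norm tB; have N0 := N; case: N0 => cn Lc L0 FC.
rewrite /phi (negbTE e4) /rem_b e1 e2 e3 /= -[RHS]mk_eta; f_equal.
apply: functional_extensionality => i; rewrite /Lb; case: ifP => // h.
rewrite L0 //; lia.
Qed.

Lemma U_ext_b t S : is_typeB t -> S \subset Aset t -> S != set0 ->
  U_rows (ext_b t S) = cntb (Aset t) S.
Proof.
move=> tB sA ne; have [tB' e1 e2 e3 e4] := ext_b_data tB sA ne.
have N := typeB_Norm tB; have N' := typeB_Norm tB'.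
rewrite /U_rows /cntb; apply: eq_card => r; rewrite !inE.
have rn : r <= n by rewrite -ltnS.
apply/idP/idP.
- move/(unresP _ N'); rewrite e1 e2 e3 (@unresbN n _ _ _ (Sn S) r N rn).
  case: (r =P ord0) => [->|/eqP r0] /=.
    by rewrite (Sn_ord S ord0).
  have r0' : (val r == 0) = false by apply/negbTE.
  have rpos : 0 < nat_of_ord r by rewrite lt0n.
  rewrite r0' => -[U H]; apply/andP; split.
    apply/(Ub_iff N) => //; have := ltn_ord r; lia.
  case: H => [gr|H]; first by rewrite -Sn_ord gr.
  apply/orP; right; apply/forallP => r'; apply/implyP => hr'.
  by rewrite -Sn_ord; apply: H.
- move=> H; apply/(unresP _ N'); rewrite e1 e2 e3 (@unresbN n _ _ _ (Sn S) r N rn).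
  move: H; case: (r =P ord0) => [->|/eqP r0] /=.
    by rewrite (Sn_ord S ord0).
  have r0' : (val r == 0) = false by apply/negbTE.
  have rpos : 0 < nat_of_ord r by rewrite lt0n.
  rewrite r0' => /andP[U H]; split.
    apply/(Ub_iff N) => //; have := ltn_ord r; lia.
  case/orP: H => [rS|/forallP H]; first by left; rewrite Sn_ord.
  right => r' hr'; rewrite /Sn; case: insubP => //= r'' _ e.
  by have := H r''; rewrite e hr'.
Qed.
End Extb.
Section Rem.
Variable n : nat.
Implicit Types (T : candB n.+1).

Lemma rem_a_spec T : is_typeB T -> lastE T ->
  is_typeB (phi T) /\ ext_a (phi T) = T.
Proof.
move=> /typeBP V hl; rewrite /phi hl /rem_a.
have V0 := remaN V (eqP hl); have N0 : Norm n (ncols T) (Ln T) (Fn T) by case: V0.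
split; first by apply/mk_typeB.
have cn : ncols T <= n by case: N0.
by rewrite /ext_a mk_ncols // (mk_Ln N0) (mk_Fn N0) mk_eta.
Qed.

Lemma Sn_col0 T : is_typeB T -> Sn (col0 T) = fun r => Fn T r 0.
Proof.
move=> /typeBP [N _ _ _ _]; apply: functional_extensionality => r.
rewrite /Sn; case: insubP => [r' _ <-|hr] /=; first by rewrite inE.
apply/esym/negbTE/negP => /(F_bound N) /andP[h _]; by rewrite h in hr.
Qed.

Lemma rem_b_spec T : is_typeB T -> ~~ lastE T ->
  [/\ is_typeB (phi T), col0 T \subset Aset (phi T), col0 T != set0 &
      ext_b (phi T) (col0 T) = T].
Proof.
move=> TB hl; have V := TB; move/typeBP: V => V; rewrite /phi (negbTE hl) /rem_b.
have hm : 0 < RL (ncols T) (Ln T) n by rewrite lt0n.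
have NT : Norm n.+1 (ncols T) (Ln T) (Fn T) by case: V.
have [ce N0 eL eF] := rembN V hm.
set c' := (ncols T).-1 in ce N0 eL eF *.
set L' := (fun i => (Ln T i).-1) in N0 eL eF *.
set F' := (fun r j => Fn T r.+1 j.+1) in N0 eL eF *.
have cn : c' <= n by case: N0.
have gb : forall r, (fun r => Fn T r 0) r -> r <= n.
  move=> r /= Fr; have := F_bound NT Fr; lia.
have V' : ValidN n.+1 c'.+1 (Lb n c' L') (Fb (fun r => Fn T r 0) F').
  by rewrite -ce -eL -eF.
have [V0 ne cond] := extbN_inv N0 gb V'.
have tB : is_typeB (mk n c' L' F') by apply/mk_typeB.
have d1 : ncols (mk n c' L' F') = c' by rewrite mk_ncols.
have d2 : Ln (mk n c' L' F') = L' by rewrite mk_Ln.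
have d3 : Fn (mk n c' L' F') = F' by rewrite mk_Fn.
have N1 : Norm n (ncols (mk n c' L' F')) (Ln (mk n c' L' F')) (Fn (mk n c' L' F')).
  by rewrite d1 d2 d3.
have ne' : exists r, Sn (col0 T) r by rewrite (Sn_col0 TB).
have cond' : forall r, Sn (col0 T) r -> r = 0 \/ UnresN c' L' F' r.-1.
  by rewrite (Sn_col0 TB).
split => //.
- by apply/(gcondsE _ N1); rewrite d1 d2 d3.
- exact/gneE.
- by rewrite /ext_b d1 d2 d3 (Sn_col0 TB) -ce -eL -eF mk_eta.
Qed.
End Rem.
Section Comb.
Variable m : nat.
Implicit Types (A S : {set 'I_m.+1}).

Definition condc S (r : 'I_m.+1) : bool :=
  if r == ord0 then r \in S
  else (r \in S) || [forall r' : 'I_m.+1, (r' < r) ==> (r' \notin S)].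

Lemma cntbE A S : cntb A S = #|[set r in A | condc S r]|.
Proof. by []. Qed.

Lemma cntb_set0 A : ord0 \in A -> cntb A set0 = (#|A|).-1.
Proof.
move=> A0; rewrite cntbE (cardsD1 ord0 A) A0 /=; apply: eq_card => r.
rewrite !inE /condc; case: (r =P ord0) => //= _; first by rewrite inE andbF.
rewrite inE /=; have -> : [forall r' : 'I_m.+1, (r' < r) ==> (r' \notin set0)].
  by apply/forallP => r'; rewrite inE implybT.
by rewrite andbT.
Qed.

Lemma cntb_notz A S z : z \in A -> z != ord0 -> (forall i, i \in A -> i <= z) ->
  S \subset A :\ z -> S != set0 -> cntb A S = cntb (A :\ z) S.
Proof.
move=> zA z0 zmax sS ne; rewrite !cntbE; apply: eq_card => r; rewrite !inE.
case: (r =P z) => [->|/eqP rz] //=; rewrite zA /= /condc (negbTE z0).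
have /subsetP sS' := sS.
have -> : (z \in S) = false.
  apply/negbTE/negP => /sS'; by rewrite !inE eqxx.
apply/negbTE/negP => /forallP H; case/set0Pn: ne => s sS0.
have := sS' _ sS0; rewrite !inE => /andP[sz sA].
have := H s; rewrite sS0 /= implybF -leqNgt => h.
have := zmax _ sA; have : nat_of_ord s != z.
  by apply: contra sz => /eqP e; apply/eqP/val_inj.
lia.
Qed.

Lemma cntb_z A S z : z \in A -> z != ord0 -> (forall i, i \in A -> i <= z) ->
  S \subset A :\ z -> cntb A (z |: S) = (cntb (A :\ z) S).+1.
Proof.
move=> zA z0 zmax sS; rewrite !cntbE.
have zS : z \notin S by move/subsetP: sS => h; apply/negP => /h; rewrite !inE eqxx.
have -> : [set r in A | condc (z |: S) r] = z |: [set r in A :\ z | condc S r].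
  apply/setP => r; rewrite !inE.
  case: (r =P z) => [->|/eqP rz] /=; first by rewrite zA /condc (negbTE z0) !inE eqxx.
  case rA: (r \in A) => //=.
  have rz' : r < z.
    have := zmax _ rA; have : nat_of_ord r != z.
      by apply: contra rz => /eqP e; apply/eqP/val_inj.
    lia.
  rewrite /condc !inE (negbTE rz) /=; case: (r == ord0) => //=; congr (_ || _).
  apply: eq_forallb => r'; case h: (r' < r) => //=; rewrite !inE.
  have -> : (r' == z) = false.
    apply/negbTE/negP => /eqP e; move: h; rewrite e; lia.
  by [].
by rewrite cardsU1 !inE eqxx /= add1n.
Qed.
End Comb.
Section Comb2.
Variable m : nat.
Local Open Scope ring_scope.

Lemma comb (R : comNzRingType) (Y : R) k : forall A : {set 'I_m.+1},
  ord0 \in A -> #|A| = k.+1 ->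
  \sum_(S : {set 'I_m.+1} | (S \subset A) && (S != set0)) Y ^+ cntb A S + Y ^+ k.+1
  = 2%:R * Y * (1 + Y) ^+ k.
Proof.
elim: k => [|k IH] A A0 cA.
  have [x Ax] : exists x, A = [set x] by apply/cards1P; rewrite cA.
  have ex : x = ord0 by move: A0; rewrite Ax inE => /eqP.
  subst x.
  rewrite (big_pred1 [set ord0]); last first.
    move=> S; rewrite /= Ax subset1; case: (S =P set0) => [->|/eqP ne].
      rewrite andbF; apply/esym/negbTE/negP => /eqP/setP/(_ ord0).
      by rewrite !inE eqxx.
    by rewrite orbF andbT.
  have -> : cntb A [set ord0] = 1%N.
    rewrite cntbE -(cards1 (@ord0 m)); apply: eq_card => r; rewrite !inE Ax inE /condc.
    by case: (r =P ord0) => [->|_]; rewrite ?inE ?eqxx.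
  by rewrite expr1 expr0 mulr1 mulr2n mulrDl mul1r.
case: (arg_maxnP (fun i : 'I_m.+1 => nat_of_ord i) A0) => z zA0 zmax.
have zA : z \in A := zA0.
have z0 : z != ord0.
  apply/negP => /eqP ez; have : A \subset [set ord0].
    apply/subsetP => i iA; rewrite inE; have := zmax i iA; rewrite ez /= => h.
    by apply/eqP/val_inj => /=; lia.
  move/subset_leq_card; rewrite cards1 cA; lia.
have zm : forall i, i \in A -> (i <= z)%N by move=> i /zmax.
set A' := A :\ z.
have cA' : #|A'| = k.+1.
  by move: cA; rewrite (cardsD1 z) zA add1n => -[].
have A0' : ord0 \in A' by rewrite !inE eq_sym z0.
have IH' := IH A' A0' cA'.
have E1 : \sum_(S : {set 'I_m.+1} | (S \subset A) && (S != set0) && (z \in S)) Y ^+ cntb A S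
   = Y * \sum_(S : {set 'I_m.+1} | S \subset A') Y ^+ cntb A' S.
  rewrite (reindex_onto (fun S' => z |: S') (fun S => S :\ z)) /=; last first.
    by move=> S /andP[_ zS]; rewrite setD1K.
  rewrite mulr_sumr; apply: eq_big => S'.
    rewrite setU11 andbT subsetD1 subUset sub1set zA /=.
    have -> : (z |: S' != set0) by apply/set0Pn; exists z; rewrite setU11.
    rewrite andbT; case zS: (z \in S').
      rewrite andbF; apply/negbTE/nandP; right; apply/negP => /eqP e.
      by move: (congr1 (fun X : {set 'I_m.+1} => z \in X) e); rewrite !inE eqxx zS.
    by rewrite setU1K ?zS // eqxx andbT.
  move=> /andP[/andP[/andP[h1 _] _] /eqP h4].
  have sS : S' \subset A :\ z.
    rewrite subsetD1; move: h1; rewrite subUset => /andP[_ ->] /=.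
    by rewrite -h4 !inE eqxx.
  rewrite (cntb_z zA z0 zm sS) exprS //.
have E2 : \sum_(S : {set 'I_m.+1} | (S \subset A) && (S != set0) && ~~ (z \in S)) Y ^+ cntb A S
   = \sum_(S : {set 'I_m.+1} | (S \subset A') && (S != set0)) Y ^+ cntb A' S.
  apply: eq_big => S; first by rewrite subsetD1 andbAC.
  move=> /andP[/andP[sA ne] zS].
  have sS : S \subset A :\ z by rewrite subsetD1 sA.
  by rewrite (cntb_notz zA z0 zm sS ne).
have E3 : \sum_(S : {set 'I_m.+1} | S \subset A') Y ^+ cntb A' S
   = Y ^+ k + \sum_(S : {set 'I_m.+1} | (S \subset A') && (S != set0)) Y ^+ cntb A' S.
  by rewrite (bigD1 set0) ?sub0set //= (cntb_set0 A0') cA'.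
rewrite (bigID (fun S : {set 'I_m.+1} => z \in S)) /= E1 E2 E3.
set N := \sum_(S : {set 'I_m.+1} | _) _ in IH' *.
have -> : N = 2%:R * Y * (1 + Y) ^+ k - Y ^+ k.+1 by rewrite -IH' addrK.
rewrite !exprS; ring.
Qed.
End Comb2.
Section Assemble.
Variable n : nat.
Local Open Scope ring_scope.
Implicit Types (t : candB n) (S : {set 'I_n.+1}).

Definition Vset (t : candB n) : {set {set 'I_n.+1}} :=
  [set S : {set 'I_n.+1} | (S \subset Aset t) && (S != set0)].

Lemma col0_ext_b t S : is_typeB t -> S \subset Aset t -> S != set0 ->
  col0 (ext_b t S) = S.
Proof.
move=> tB sA ne; have [_ _ _ e3 _] := ext_b_data tB sA ne.
apply/setP => r; rewrite inE e3 /Fb /=; exact: Sn_ord.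
Qed.

Lemma fiberE t : is_typeB t ->
  [set T in typeB_tableaux n.+1 | phi T == t] = ext_a t |: [set ext_b t S | S in Vset t].
Proof.
move=> tB; apply/setP => T; rewrite !inE; apply/idP/idP.
- case/andP => TB /eqP <-; case hl: (lastE T).
    by have [_ e] := rem_a_spec TB hl; rewrite e eqxx.
  have [_ sA ne e] := rem_b_spec TB (negbT hl).
  apply/orP; right; apply/imsetP; exists (col0 T); first by rewrite inE sA ne.
  by rewrite e.
- case/orP => [/eqP ->|/imsetP [S]].
    have [tB' _ _ _ _] := ext_a_data tB; by rewrite tB' phi_ext_a // eqxx.
  rewrite inE => /andP[sA ne] ->.
  have [tB' _ _ _ _] := ext_b_data tB sA ne; by rewrite tB' phi_ext_b // eqxx.
Qed.

Lemma Aset_card t : is_typeB t -> #|Aset t| = (U_rows t).+1.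
Proof.
move=> tB; rewrite /Aset /U_rows !card_sum big_ord_recl /= add1n; congr _.+1.
apply: eq_bigr => r _; by rewrite /Ub /= valK.
Qed.

Lemma fiber_sum (R : comNzRingType) (Y : R) t : is_typeB t ->
  \sum_(T in [set T in typeB_tableaux n.+1 | phi T == t]) Y ^+ U_rows T
  = 2%:R * Y * (1 + Y) ^+ U_rows t.
Proof.
move=> tB; rewrite fiberE // big_setU1 /=; last first.
  apply/imsetP => -[S]; rewrite inE => /andP[sA ne] e.
  have [_ _ _ _ l1] := ext_a_data tB; have [_ _ _ _ l2] := ext_b_data tB sA ne.
  by move: l2; rewrite -e l1.
rewrite big_imset /=; last first.
  move=> S1 S2; rewrite !inE => /andP[s1 n1] /andP[s2 n2] e.
  by rewrite -(col0_ext_b tB s1 n1) -(col0_ext_b tB s2 n2) e.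
rewrite U_ext_a //.
rewrite (eq_bigr (fun S => Y ^+ cntb (Aset t) S)); last first.
  by move=> S; rewrite inE => /andP[sA ne]; rewrite U_ext_b.
have A0 : ord0 \in Aset t by rewrite inE eqxx.
have := comb Y A0 (Aset_card tB).
move=> <-; rewrite addrC; congr (_ + _); apply: eq_bigl => S; by rewrite inE.
Qed.
End Assemble.
Local Open Scope ring_scope.

Lemma phi_typeB n (T : candB n.+1) : is_typeB T -> is_typeB (phi T).
Proof.
move=> TB; case hl: (lastE T).
  by case: (rem_a_spec TB hl).
by case: (rem_b_spec TB (negbT hl)).
Qed.

Lemma B0_sum (R : comNzRingType) (Y : R) :
  \sum_(t in typeB_tableaux 0) Y ^+ U_rows t = 1.
Proof.
have all_eq : forall t1 t2 : candB 0, t1 = t2.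
  move=> [[c1 l1] f1] [[c2 l2] f2].
  have -> : c1 = c2 by rewrite (ord1 c1) (ord1 c2).
  have -> : l1 = l2 by apply/ffunP => -[].
  have -> // : f1 = f2 by apply/ffunP => -[[]].
pose t0 : candB 0 := mk 0 0 (fun _ => 0%N) (fun _ _ => false).
have t0B : is_typeB t0.
  have N0 : Norm 0 0 (fun _ => 0%N) (fun _ _ => false) by split.
  by apply/(mk_typeB N0); split.
rewrite (big_pred1 t0); last first.
  by move=> t; rewrite /= inE (all_eq t t0) t0B eqxx.
have -> : U_rows t0 = 0%N by rewrite /U_rows card_sum big_ord0.
by rewrite expr0.
Qed.

Lemma sumPow (R : comNzRingType) n : forall Y : R,
  \sum_(t in typeB_tableaux n) Y ^+ U_rows t = \prod_(j < n) ((Y + j%:R) *+ 2).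
Proof.
elim: n => [|n IH] Y; first by rewrite B0_sum big_ord0.
rewrite (partition_big (@phi n) (fun t => t \in typeB_tableaux n)) /=; last first.
  by move=> T; rewrite !inE; apply: phi_typeB.
rewrite (eq_bigr (fun t => 2%:R * Y * (1 + Y) ^+ U_rows t)); last first.
  move=> t tB; rewrite -(fiber_sum Y (n := n)); last by move: tB; rewrite inE.
  by apply: eq_bigl => T; rewrite !inE.
rewrite -mulr_sumr IH big_ord_recl /=; congr (_ * _).
  by rewrite addr0 mulr2n mulrDl mul1r.
apply: eq_bigr => j _; congr (_ *+ 2); rewrite /bump /= add1n -addn1 natrD; ring.
Qed.
Definition qpoly n : {poly rat} := \prod_(j < n) (('X + j%:R) *+ 2).

Lemma dnat k : ((k%:R : {poly rat})^`()) = 0.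
Proof. by rewrite derivMn -polyC1 derivC mul0rn. Qed.

Lemma hnat k (x : rat) : (k%:R : {poly rat}).[x] = k%:R.
Proof. by rewrite hornerMn -polyC1 hornerC. Qed.

Lemma hone (x : rat) : (1 : {poly rat}).[x] = 1.
Proof. by rewrite -polyC1 hornerC. Qed.

Lemma qprop n : ((qpoly n)^`()).[1] = (qpoly n).[1] * harmonic n /\ (qpoly n).[1] != 0.
Proof.
elim: n => [|n [IH1 IH2]].
  rewrite /qpoly /harmonic !big_ord0 hone mulr0 oner_eq0; split => //.
  by rewrite -polyC1 derivC horner0.
have eq : qpoly n.+1 = qpoly n * (('X + n%:R) *+ 2) by rewrite /qpoly big_ord_recr.
have hq : (qpoly n.+1).[1] = (qpoly n).[1] * ((1 + n%:R) *+ 2).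
  by rewrite eq hornerM hornerMn hornerD hornerX hnat.
have nz : (1 + n%:R : rat) != 0.
  by rewrite addrC natr1 pnatr_eq0.
split; last first.
  by rewrite hq mulf_neq0 // -mulr_natr mulf_neq0.
rewrite hq eq derivM derivMn derivD derivX dnat addr0 hornerD !hornerM hornerMn hornerD hornerX hnat.
rewrite IH1 hornerMn hone.
rewrite /harmonic big_ord_recr /= -/(harmonic n).
rewrite -natr1; field.
by rewrite natr1 pnatr_eq0.
Qed.
Local Close Scope ring_scope.

Theorem mainTheorem5 (n : nat) :
  (1 <= n)%N ->
  uniform_expect (typeB_tableaux n) (@U_rows n) = harmonic n.
Proof.
move=> _; rewrite /uniform_expect.
have hs : (\sum_(t in typeB_tableaux n) 'X ^+ U_rows t)%R = qpoly n by rewrite sumPow.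
have e1 : (\sum_(t in typeB_tableaux n) (U_rows t)%:R)%R = ((qpoly n)^`()).[1]%R.
  rewrite -hs raddf_sum horner_sum; apply: eq_bigr => t _.
  have -> : forall p : {poly rat}, poly_deriv__canonical__Algebra_Additive rat p = deriv p by [].
  by rewrite derivXn hornerMn hornerXn expr1n.
have e2 : ((#|typeB_tableaux n|)%:R = (qpoly n).[1])%R.
  rewrite -hs horner_sum (eq_bigr (fun _ => 1%R)); first by rewrite sumr_const.
  by move=> t _; rewrite hornerXn expr1n.
have [h1 h2] := qprop n.
by rewrite e1 e2 h1 mulrAC mulfV // mul1r.
Qed.
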